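(* Let $(\Gamma,g)$ be a vertex-weighted metric graph of genus $g(\Gamma)$, and let $F$ be a tropical meromorphic function on $\Gamma$ with $\operatorname{div}(F)+K_\Gamma\geq0$. Then for every $x\in\Gamma$ and every tangent direction $v$ at $x$, $|d_vF(x)|\leq2g(\Gamma)-1$. If $K_\Gamma$ is effective (i.e. $\Gamma$ has no genus-zero leaves), then $|d_vF(x)|\leq2g(\Gamma)-2$.
   Context: A vertex-weighted metric graph is a compact connected metric graph with finite vertex set and weights $g(x)\in\mathbb{Z}_{\geq0}$ on vertices; non-vertices have weight $0$ and valency $\deg(x)=2$. Genus: $g(\Gamma)=h_1(\Gamma)+\sum_xg(x)$. Canonical divisor: $K_\Gamma=\sum_x(2g(x)-2+\deg(x))(x)$. A genus-zero leaf is a vertex of weight $0$ and valency $1$. A tropical meromorphic function is a continuous piecewise affine function $\Gamma\to\mathbb{R}$ with integer slopes; $d_vF(x)$ is the slope of $F$ at $x$ in direction $v$, and $\operatorname{div}(F)=\sum_x\operatorname{ord}_x(F)(x)$ with $\operatorname{ord}_x(F)=-\sum_vd_vF(x)$, the sum over tangent directions at $x$. *)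

(* Defs.v *)
From HB Require Import structures.
From mathcomp Require Import all_boot all_order all_algebra.
From mathcomp Require Import boolp classical_sets reals.
Set Implicit Arguments. Unset Strict Implicit. Unset Printing Implicit Defensive.
Import Order.TTheory GRing.Theory Num.Theory.
Local Open Scope ring_scope.

(* Edge e is identified with the segment [0, len e],
   0 corresponding to src e and len e to tgt e. *)
Record mgraph (R : realType) := MGraph {
  vert : finType;
  edge : finType;
  src : edge -> vert;
  tgt : edge -> vert;
  len : edge -> R;
  len_pos : forall e, 0 < len e;
  wt : vert -> nat }.

Section MetricGraph.
Variables (R : realType) (G : mgraph R).

Definition adj : rel (vert G) := fun u w =>
  [exists e, ((src e == u) && (tgt e == w)) || ((src e == w) && (tgt e == u))].

Definition mg_connected : Prop := forall u w : vert G, connect adj u w.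

(* valency of a vertex: number of half-edges (a loop counts twice) *)
Definition deg (v : vert G) : nat :=
  #|[set e | src e == v]| + #|[set e | tgt e == v]|.

(* g(Gamma) = h_1(Gamma) + sum of weights, with h_1 = |E| - |V| + 1 *)
Definition genus : int :=
  (#|edge G|)%:Z - (#|vert G|)%:Z + 1 + \sum_(v : vert G) (wt v)%:Z.

(* points of Gamma: vertices, or interior points t (0 < t < len e) of edges *)
Inductive gpoint := PVert of vert G | PEdge of edge G & R.

Definition valid (x : gpoint) : Prop :=
  match x with PVert _ => True | PEdge e t => 0 < t < len e end.

(* tangent directions: (e, true) = leaving along e in the direction of
   increasing parameter, (e, false) = decreasing parameter. *)
Definition is_dir (x : gpoint) (d : edge G * bool) : bool :=
  match x with
  | PVert v => if d.2 then src d.1 == v else tgt d.1 == v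
  | PEdge e _ => d.1 == e
  end.

Definition Kcoef (x : gpoint) : int :=
  match x with
  | PVert v => 2 * (wt v)%:Z - 2 + (deg v)%:Z
  | PEdge _ _ => 0
  end.

Definition K_effective : Prop := forall x, valid x -> 0 <= Kcoef x.

Definition pw_affine_int (f : R -> R) (L : R) : Prop :=
  exists ts : seq R,
    [/\ path <%R 0 ts, last 0 ts = L &
      forall i, (i < size ts)%N ->
        exists s : int, forall y, nth 0 (0 :: ts) i <= y <= nth 0 ts i ->
          f y = f (nth 0 (0 :: ts) i) + s%:~R * (y - nth 0 (0 :: ts) i)].

Record trop_fun := TropFun {
  FV : vert G -> R;
  FE : edge G -> R -> R;
  FE_src : forall e, FE e 0 = FV (src e);
  FE_tgt : forall e, FE e (len e) = FV (tgt e);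
  FE_pw : forall e, pw_affine_int (FE e) (len e) }.

Definition Fval (F : trop_fun) (x : gpoint) : R :=
  match x with PVert v => FV F v | PEdge e t => FE F e t end.

Definition dslope (F : trop_fun) (x : gpoint) (d : edge G * bool) (s : R) : Prop :=
  match x with
  | PVert v => exists2 eps, 0 < eps <= len d.1 &
      forall u, 0 < u < eps ->
        FE F d.1 (if d.2 then u else len d.1 - u) = FV F v + s * u
  | PEdge e t => exists2 eps,
      0 < eps /\ (if d.2 then t + eps <= len e else eps <= t) &
      forall u, 0 < u < eps ->
        FE F e (if d.2 then t + u else t - u) = FE F e t + s * u
  end.

Definition slope (F : trop_fun) (x : gpoint) (d : edge G * bool) : R :=
  xget 0 [set s | dslope F x d s].

Definition ord (F : trop_fun) (x : gpoint) : R :=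
  - \sum_(d : edge G * bool | is_dir x d) slope F x d.

Definition div_plus_K_ge0 (F : trop_fun) : Prop :=
  forall x, valid x -> 0 <= ord F x + (Kcoef x)%:~R.

End MetricGraph.

Arguments gpoint {R} G.
Arguments genus {R} G.
Arguments K_effective {R} G.
Arguments mg_connected {R} G.

(* Main.v *)
Require Import Defs.
From HB Require Import structures.
From mathcomp Require Import all_boot all_order all_algebra.
From mathcomp Require Import boolp classical_sets reals.
From mathcomp Require Import zify ring lra.
Set Implicit Arguments. Unset Strict Implicit. Unset Printing Implicit Defensive.
Import Order.TTheory GRing.Theory Num.Theory.
Local Open Scope ring_scope.

Lemma sum_ind (N : finType) (A : pred N) (y : N) (x : int) :
  \sum_(n | A n) (y == n)%:R * x = (A y)%:R * x.
Proof.
case Hy: (A y).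
  rewrite (bigD1 y) //= eqxx mul1r big1 ?addr0 // => n /andP[_ /negbTE].
  by rewrite eq_sym => ->; rewrite mul0r.
rewrite big1 ?mul0r // => n nA.
by case: eqP => [e|_]; [rewrite e nA in Hy|rewrite mul0r].
Qed.

Lemma b2i (x : bool) (y : int) : x%:R * y = if x then y else 0.
Proof. by case: x; rewrite /= ?mulr1n ?mul1r ?mul0r ?mulr0n. Qed.

Section Gen.
Variables (R : realDomainType) (N Sg : finType) (a b : Sg -> N) (sg : Sg -> int)
  (phi : N -> R) (l : Sg -> R) (w : N -> nat).
Hypothesis lpos : forall s, 0 < l s.
Hypothesis hphi : forall s, phi (b s) - phi (a s) = (sg s)%:~R * l s.

Definition outs n : int := \sum_s ((a s == n)%:R * sg s - (b s == n)%:R * sg s).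
Definition gdeg n : int := \sum_s ((a s == n)%:R * 1 + (b s == n)%:R * 1).
Definition gK n : int := 2 * (w n)%:Z - 2 + gdeg n.
Definition gg : int := #|Sg|%:Z - #|N|%:Z + 1 + \sum_n (w n)%:Z.
Definition gD n := - outs n + gK n.

Lemma sum_outs (A : pred N) : \sum_(n | A n) outs n =
  \sum_s ((A (a s))%:R * sg s - (A (b s))%:R * sg s).
Proof.
rewrite /outs exchange_big /=; apply: eq_bigr => s _.
by rewrite sumrB !sum_ind.
Qed.

Lemma sum_gdeg (A : pred N) : \sum_(n | A n) gdeg n =
  \sum_s ((A (a s))%:R * 1 + (A (b s))%:R * 1).
Proof.
rewrite /gdeg exchange_big /=; apply: eq_bigr => s _.
by rewrite big_split /= !sum_ind.
Qed.

Lemma sum_gK (A : pred N) : \sum_(n | A n) gK n =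
  2 * \sum_(n | A n) (w n)%:Z - 2 * #|A|%:Z + \sum_s ((A (a s))%:R * 1 + (A (b s))%:R * 1).
Proof.
rewrite /gK -sum_gdeg !big_split /= -mulr_sumr sumr_const.
by congr (_ + _ + _); rewrite -mulr_natr -natz; lia.
Qed.

Lemma sum_gD : \sum_n gD n = 2 * gg - 2.
Proof.
rewrite /gD big_split /= sumrN sum_outs sum_gK.
rewrite big1; last by move=> s _; rewrite subrr.
rewrite (eq_bigr (fun _ : Sg => 2%:Z)); last by move=> *; rewrite !mulr1.
rewrite sumr_const /gg -mulr_natr -natz.
have e1 : #|(fun _ : N => true)| = #|N| by []. have e2 : #|(fun _ : Sg => true)| = #|Sg| by [].
rewrite e1 e2; lia.
Qed.

Lemma sg_neg s : phi (b s) < phi (a s) -> sg s < 0.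
Proof.
move=> h; have : (sg s)%:~R * l s < 0 :> R by rewrite -hphi subr_lt0.
by rewrite pmulr_llt0 // ltrz0.
Qed.

Lemma sg_pos s : phi (a s) < phi (b s) -> 0 < sg s.
Proof.
move=> h; have : 0 < (sg s)%:~R * l s :> R by rewrite -hphi subr_gt0.
by rewrite pmulr_lgt0 // ltr0z.
Qed.

Hypothesis hD : forall n, 0 <= gD n.

Section Key.
Variable u : N.
Definition ok n := phi u <= phi n.
Definition step (X : {set N}) : {set N} := X :|: [set n | (n == u) ||
  [exists s, [&& ok (a s), ok (b s) &
     ((a s \in X) && (b s == n) || (b s \in X) && (a s == n))]]].

Lemma step_mono : {homo step : X Y / X \subset Y}.
Proof.
move=> X Y sXY; apply/fintype.subsetP => n; rewrite !inE => /orP[nX|/orP[->|]].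
- by rewrite (fintype.subsetP sXY).
- by rewrite orbT.
move=> /existsP[s /and3P[oa ob h]]; apply/orP; right; apply/orP; right.
apply/existsP; exists s; rewrite oa ob /=.
by case/orP: h => /andP[h1 /eqP <-]; rewrite (fintype.subsetP sXY _ h1) ?eqxx ?orbT.
Qed.

Definition Sset := fixset step.

Lemma S_ok n : n \in Sset -> ok n.
Proof.
rewrite /Sset /fixset; elim: #|N| n => [|k IH] n /=; first by rewrite inE.
rewrite inE => /orP[/IH//|]; rewrite inE => /orP[/eqP->|]; first exact: lexx.
by case/existsP => s /and3P[oa ob /orP[] /andP[_ /eqP<-]].
Qed.

Lemma u_in_S : u \in Sset.
Proof. by rewrite /Sset -(fixsetK step_mono) !inE eqxx !orbT. Qed.

Lemma S_closed_b s : a s \in Sset -> ok (b s) -> b s \in Sset.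
Proof.
move=> aS ob; rewrite /Sset -(fixsetK step_mono) !inE; apply/orP; right.
apply/orP; right; apply/existsP; exists s; rewrite ob (S_ok aS) /=.
by rewrite aS eqxx.
Qed.

Lemma S_closed_a s : b s \in Sset -> ok (a s) -> a s \in Sset.
Proof.
move=> bS oa; rewrite /Sset -(fixsetK step_mono) !inE; apply/orP; right.
apply/orP; right; apply/existsP; exists s; rewrite oa (S_ok bS) /=.
by rewrite bS eqxx orbT.
Qed.

Definition ford := fix_order step.

Definition par n s := [&& a s \in Sset, b s \in Sset &
  ((b s == n) && (ford (a s) < ford n)%N || (a s == n) && (ford (b s) < ford n)%N)].

Lemma parent n : n \in Sset -> n != u -> exists s, par n s.
Proof.
move=> nS nu; have := in_iter_fix_orderE step n; rewrite nS.
have := fix_order_gt0 step n; rewrite nS; rewrite /par -/ford.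
case E: (ford n) => [//|k] _ /=; rewrite inE => /orP[].
  by move/(fix_order_small step_mono); rewrite -/ford E ltnn.
rewrite inE (negbTE nu) /= => /existsP[s /and3P[_ _ h]]; exists s.
case/orP: h => /andP[h1 /eqP e]; rewrite e nS ?andbT ?eqxx /=.
- rewrite (fintype.subsetP (iter_sub_fix step_mono k)) //=.
  by rewrite ltnS (fix_order_small step_mono h1).
- rewrite (fintype.subsetP (iter_sub_fix step_mono k)) //= orbC.
  by rewrite ltnS (fix_order_small step_mono h1).
Qed.

Definition Iset := [set s | (a s \in Sset) && (b s \in Sset)].

Lemma card_I (s0 : Sg) : (#|Sset| <= #|Iset|.+1)%N.
Proof.
pose f n := odflt s0 [pick s | par n s].
have fP n : n \in Sset :\ u -> par n (f n).
  rewrite !inE => /andP[nu nS]; rewrite /f.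
  case: pickP => [s //|h]; have [s ps] := parent nS nu.
  by rewrite h in ps.
have finj : {in Sset :\ u &, injective f}.
  move=> n n' /fP p /fP p' e; rewrite -e in p'.
  move: p p'; rewrite /par; set s := f n.
  case/and3P=> _ _ /orP[]/andP[/eqP e1 l1]; case/and3P=> _ _ /orP[]/andP[/eqP e2 l2];
    rewrite -?e1 -?e2 //.
  - by rewrite e1 in l2; rewrite e2 in l1; move: (ltn_trans l1 l2); rewrite ltnn.
  - by rewrite e1 in l2; rewrite e2 in l1; move: (ltn_trans l1 l2); rewrite ltnn.
have sub : f @: (Sset :\ u) \subset Iset.
  apply/fintype.subsetP => s /imsetP[n /fP p ->]; rewrite inE.
  by case/and3P: p => -> ->.
have := subset_leq_card sub; rewrite card_in_imset // => h.
by rewrite (cardsD1 u Sset) u_in_S add1n ltnS.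
Qed.

Lemma key (s0 : Sg) :
  (a s0 == u) && (phi (b s0) < phi u) || (b s0 == u) && (phi (a s0) < phi u) ->
  `|sg s0| - 1 <= 2 * gg - 2 /\ ((forall n, 0 <= gK n) -> `|sg s0| <= 2 * gg - 2).
Proof.
move=> hs0.
pose c s := (a s \in Sset)%:R * sg s - (b s \in Sset)%:R * sg s.
pose d s : int := (a s \in Sset)%:R * 1 + (b s \in Sset)%:R * 1.
have c_le0 s : c s <= 0.
  rewrite /c; case aS: (a s \in Sset); case bS: (b s \in Sset); rewrite !b2i ?subrr //.
  - rewrite subr0; apply: ltW; apply: sg_neg.
    have oa := S_ok aS; have : ~~ ok (b s) by apply: contraFN bS; apply: S_closed_b.
    by rewrite /ok -ltNge => h; apply: lt_le_trans h oa.
  - rewrite sub0r oppr_le0; apply: ltW; apply: sg_pos.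
    have ob := S_ok bS; have : ~~ ok (a s) by apply: contraFN aS; apply: S_closed_a.
    by rewrite /ok -ltNge => h; apply: lt_le_trans h ob.
have cs0 : c s0 = - `|sg s0|.
  case/orP: hs0 => /andP[/eqP au lt].
  - have aS : a s0 \in Sset by rewrite au u_in_S.
    have bS : b s0 \in Sset = false.
      by apply/negbTE; apply: contraL lt => /S_ok; rewrite /ok -leNgt.
    rewrite /c aS bS !b2i subr0 ltr0_norm ?opprK //; apply: sg_neg; by rewrite au.
  - have bS : b s0 \in Sset by rewrite au u_in_S.
    have aS : a s0 \in Sset = false.
      by apply/negbTE; apply: contraL lt => /S_ok; rewrite /ok -leNgt.
    rewrite /c aS bS !b2i sub0r gtr0_norm //; apply: sg_pos; by rewrite au.
have sumc : `|sg s0| <= - \sum_s c s.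
  rewrite (bigD1 s0) //= opprD cs0 opprK lerDl -sumrN sumr_ge0 // => s _.
  by rewrite oppr_ge0.
have hsplit : \sum_(n in Sset) gD n <= 2 * gg - 2.
  by rewrite -sum_gD [X in _ <= X](bigID (fun n => n \in Sset)) /= lerDl sumr_ge0.
have eqS : \sum_(n in Sset) gD n = - \sum_s c s + \sum_(n in Sset) gK n.
  by rewrite /gD big_split /= sumrN sum_outs.
split; last first.
  move=> hK; have : 0 <= \sum_(n in Sset) gK n by apply: sumr_ge0.
  lia.
have hw : 0 <= \sum_(n in Sset) (w n)%:Z by apply: sumr_ge0.
have hI := card_I s0.
have hd : 2 * #|Iset|%:Z + 1 <= \sum_s d s.
  rewrite (bigID (fun s => s \in Iset)) /=.
  rewrite (eq_bigr (fun _ => 2%:Z)); last first.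
    by move=> s; rewrite inE /d => /andP[-> ->]; rewrite !b2i.
  have e2 : (2%Z *+ #|Iset|) = 2 * #|Iset|%:Z by elim: #|Iset| => // k IH; rewrite mulrS IH; lia.
  rewrite sumr_const e2 lerD2l.
  have hx : ((a s0 \in Sset) && (b s0 \notin Sset)) || ((b s0 \in Sset) && (a s0 \notin Sset)).
    case/orP: hs0 => /andP[/eqP au lt]; rewrite au u_in_S /=;
      [apply/orP; left|apply/orP; right]; apply: contraL lt => /S_ok;
      by rewrite /ok -leNgt.
  have s0I : s0 \in Iset = false.
    by rewrite inE; case/orP: hx => /andP[-> /negbTE ->]; rewrite ?andbF.
  rewrite (bigD1 s0) ?s0I //= -[1]addr0 lerD //.
    by rewrite /d !b2i; case/orP: hx => /andP[-> /negbTE ->].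
  by apply: sumr_ge0 => s _; rewrite /d !b2i; case: (_ \in _); case: (_ \in _).
have eK : \sum_(n in Sset) gK n = 2 * \sum_(n in Sset) (w n)%:Z - 2 * #|Sset|%:Z +
    \sum_s d s.
  have := sum_gK (fun n => n \in Sset).
  have -> : #|(fun n => n \in Sset)| = #|Sset| by apply: eq_card.
  by [].
have hI2 : #|Sset|%:Z <= #|Iset|%:Z + 1 by rewrite -[1]/(1%N:int) -PoszD lez_nat addn1.
lia.
Qed.

End Key.

Lemma gen_main s : `|sg s| <= 2 * gg - 1 /\
  ((forall n, 0 <= gK n) -> `|sg s| <= 2 * gg - 2).
Proof.
have g1 : 0 <= 2 * gg - 2 by rewrite -sum_gD; apply: sumr_ge0.
case: (sg s =P 0) => [z|nz].
  by rewrite z normr0; split => [|_]; lia.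
have [neg|pos] : sg s < 0 \/ 0 < sg s by lia.
- have lt : phi (b s) < phi (a s) by rewrite -subr_lt0 hphi pmulr_llt0 // ltrz0.
  have [h1 h2] := key (u := a s) (s0 := s) ltac:(by rewrite eqxx lt).
  by split; [lia|move=> /h2].
- have lt : phi (a s) < phi (b s) by rewrite -subr_gt0 hphi pmulr_lgt0 // ltr0z.
  have [h1 h2] := key (u := b s) (s0 := s) ltac:(by rewrite eqxx lt orbT).
  by split; [lia|move=> /h2].
Qed.
End Gen.

Section Tr.
Variables (R : realType) (G : mgraph R) (F : trop_fun G).

Definition ts e : seq R := proj1_sig (cid (FE_pw F e)).
Lemma tsP e : [/\ path <%R 0 (ts e), last 0 (ts e) = len e &
      forall i, (i < size (ts e))%N ->
        exists s : int, forall y, nth 0 (0 :: ts e) i <= y <= nth 0 (ts e) i ->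
          FE F e y = FE F e (nth 0 (0 :: ts e) i) + s%:~R * (y - nth 0 (0 :: ts e) i)].
Proof. exact: (proj2_sig (cid (FE_pw F e))). Qed.

Definition k e := size (ts e).
Definition p e j := nth 0 (0 :: ts e) j.

Lemma pk e : p e (k e) = len e.
Proof. by case: (tsP e) => _ <- _; rewrite (last_nth 0). Qed.

Lemma k_gt0 e : (0 < k e)%N.
Proof.
case: (tsP e) => _ hl _; rewrite /k; case: (ts e) hl => //= hl.
by have := len_pos e; rewrite -hl ltxx.
Qed.

Lemma p_lt e i : (i < k e)%N -> p e i < p e i.+1.
Proof. by case: (tsP e) => /(pathP 0) h _ _ /h. Qed.

Lemma p_le e i j : (i <= j)%N -> (j <= k e)%N -> p e i <= p e j.
Proof.
move=> ij; elim: j ij => [|j IH]; first by rewrite leqn0 => /eqP ->.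
rewrite leq_eqVlt => /orP[/eqP -> //|]; rewrite ltnS => ij jk.
by apply: le_trans (IH ij (ltnW jk)) (ltW (p_lt jk)).
Qed.

Lemma p_ge0 e i : (i <= k e)%N -> 0 <= p e i.
Proof. by move=> h; apply: (p_le (leq0n i) h). Qed.

Lemma p_lelen e i : (i <= k e)%N -> p e i <= len e.
Proof. by move=> h; rewrite -pk; apply: p_le. Qed.

Lemma piece e i : exists s : int, (i < k e)%N -> forall y, p e i <= y <= p e i.+1 ->
  FE F e y = FE F e (p e i) + s%:~R * (y - p e i).
Proof.
case: (ltnP i (k e)) => h; last by exists 0.
by case: (tsP e) => _ _ /(_ i h) [s hs]; exists s.
Qed.

Definition sl e i : int := proj1_sig (cid (piece e i)).
Lemma slP e i : (i < k e)%N -> forall y, p e i <= y <= p e i.+1 ->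
  FE F e y = FE F e (p e i) + (sl e i)%:~R * (y - p e i).
Proof. exact: (proj2_sig (cid (piece e i))). Qed.

Lemma sl_step e i : (i < k e)%N ->
  FE F e (p e i.+1) - FE F e (p e i) = (sl e i)%:~R * (p e i.+1 - p e i).
Proof.
move=> h; rewrite (slP h (y := p e i.+1)); first by ring.
by rewrite lexx andbT ltW // p_lt.
Qed.

Lemma find_fwd e t : 0 < t < len e -> exists2 i, (i < k e)%N & p e i <= t < p e i.+1.
Proof.
case/andP=> t0 tl.
suff H : forall j, (j <= k e)%N -> t < p e j -> exists2 i, (i < j)%N & p e i <= t < p e i.+1.
  by apply: H; rewrite ?pk.
elim=> [|j IH] jk tj; first by move: tj; rewrite /p /= ltNge (ltW t0).
case: (ltP t (p e j)) => h.
  by have [i ij hi] := IH (ltnW jk) h; exists i => //; apply: ltnW.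
by exists j; rewrite ?h.
Qed.

Lemma find_bwd e t : 0 < t < len e -> exists2 i, (i < k e)%N & p e i < t <= p e i.+1.
Proof.
case/andP=> t0 tl.
suff H : forall j, (j <= k e)%N -> t <= p e j -> exists2 i, (i < j)%N & p e i < t <= p e i.+1.
  by apply: H; rewrite ?pk // ltW.
elim=> [|j IH] jk tj; first by move: tj; rewrite /p /= leNgt t0.
case: (leP t (p e j)) => h.
  by have [i ij hi] := IH (ltnW jk) h; exists i => //; apply: ltnW.
by exists j; rewrite ?h.
Qed.


Lemma small_pos (x y : R) : 0 < x -> 0 < y -> exists u, [/\ 0 < u, u < x & u < y].
Proof.
move=> x0 y0; case: (leP x y) => h; [exists (x / 2)|exists (y / 2)]; split; lra.
Qed.

Lemma slope_eq x d s : dslope F x d s -> slope F x d = s.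
Proof.
move=> h; rewrite /slope; apply: xget_unique => //= s' h'.
case: x h h' => [v|e t] /=.
- move=> [eps /andP[e0 _] H] [eps' /andP[e0' _] H'].
  have [u [u0 ue ue']] := small_pos e0 e0'.
  have := H u; have := H' u; rewrite u0 ue ue' => -> // /(_ isT) /addrI /mulIf.
  by apply; rewrite gt_eqF.
- move=> [eps [e0 _] H] [eps' [e0' _] H'].
  have [u [u0 ue ue']] := small_pos e0 e0'.
  have := H u; have := H' u; rewrite u0 ue ue' => -> // /(_ isT) /addrI /mulIf.
  by apply; rewrite gt_eqF.
Qed.

Lemma slope_fwd e t i : (i < k e)%N -> p e i <= t < p e i.+1 ->
  slope F (PEdge e t) (e, true) = (sl e i)%:~R.
Proof.
move=> ik /andP[t1 t2]; apply: slope_eq => /=.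
exists (p e i.+1 - t); first by split; [lra|have := p_lelen ik; lra].
move=> u /andP[u0 u1].
rewrite (slP ik (y := t + u)); last by apply/andP; split; lra.
rewrite (slP ik (y := t)); last by apply/andP; split; lra.
ring.
Qed.

Lemma slope_bwd e t i : (i < k e)%N -> p e i < t <= p e i.+1 ->
  slope F (PEdge e t) (e, false) = - (sl e i)%:~R.
Proof.
move=> ik /andP[t1 t2]; apply: slope_eq => /=.
have := p_ge0 (ltnW ik) => h0.
exists (t - p e i); first by split; lra.
move=> u /andP[u0 u1].
rewrite (slP ik (y := t - u)); last by apply/andP; split; lra.
rewrite (slP ik (y := t)); last by apply/andP; split; lra.
ring.
Qed.

Lemma slope_src e : slope F (PVert (src e)) (e, true) = (sl e 0)%:~R.
Proof.
have k0 := k_gt0 e; apply: slope_eq => /=.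
have := p_lt k0; have := p_lelen k0; rewrite /= {1 3}/p /= => h1 h2.
exists (p e 1); first by apply/andP; split.
move=> u /andP[u0 u1].
have p0 : p e 0 = 0 by [].
rewrite (slP k0 (y := u)); last by rewrite p0; apply/andP; split; lra.
by rewrite p0 -(FE_src F e) subr0.
Qed.

Lemma slope_tgt e : slope F (PVert (tgt e)) (e, false) = - (sl e (k e).-1)%:~R.
Proof.
have k0 := k_gt0 e; have kk : ((k e).-1 < k e)%N by rewrite prednK.
apply: slope_eq => /=.
have := p_lt kk; have := p_ge0 (ltnW kk); rewrite prednK // pk => h1 h2.
exists (len e - p e (k e).-1); first by apply/andP; split; lra.
move=> u /andP[u0 u1].
have := sl_step kk; rewrite prednK // pk (FE_tgt F e) => hs.
rewrite (slP kk (y := len e - u)); last by rewrite prednK // pk; apply/andP; split; lra.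
have -> : FE F e (p e (k e).-1) = FV F (tgt e) - (sl e (k e).-1)%:~R * (len e - p e (k e).-1).
  by rewrite -hs; ring.
ring.
Qed.


Definition Mp := \max_(e : edge G) k e.
Local Notation M := Mp.+1.
Lemma k_ltM e : (k e < M)%N.
Proof. by rewrite ltnS; apply: (leq_bigmax e). Qed.

Definition Sg := (edge G * 'I_M)%type.
Definition Nd := (vert G + Sg)%type.

Definition aS (s : Sg) : Nd :=
  if (k s.1 <= s.2)%N then inr s
  else if (s.2 == 0%N :> nat) then inl (src s.1) else inr (s.1, inord (s.2).-1).
Definition bS (s : Sg) : Nd :=
  if (k s.1 <= s.2)%N then inr s
  else if (s.2.+1 == k s.1) then inl (tgt s.1) else inr s.
Definition sgS (s : Sg) : int := if (s.2 < k s.1)%N then sl s.1 s.2 else 0.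
Definition phiS (n : Nd) : R := match n with
  | inl v => FV F v
  | inr s => if (s.2 < k s.1)%N then FE F s.1 (p s.1 s.2.+1) else 0 end.
Definition lS (s : Sg) : R := if (s.2 < k s.1)%N then p s.1 s.2.+1 - p s.1 s.2 else 1.
Definition wS (n : Nd) : nat := match n with
  | inl v => wt v
  | inr s => (s.2.+1 == k s.1) end.

Lemma lS_pos s : 0 < lS s.
Proof. by rewrite /lS; case: ltnP => h //; rewrite subr_gt0 p_lt. Qed.

Lemma hphiS s : phiS (bS s) - phiS (aS s) = (sgS s)%:~R * lS s.
Proof.
case: s => e i; rewrite /aS /bS /sgS /lS /=; case: leqP => hi /=.
  by rewrite subrr mul0r.
have -> : phiS (if i.+1 == k e then inl (tgt e) else inr (e, i)) = FE F e (p e i.+1).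
  case: eqP => [ee|_] /=; last by rewrite hi.
  by rewrite -(FE_tgt F e) -pk -ee.
have -> : phiS (if (i == 0%N :> nat) then inl (src e) else inr (e, inord i.-1)) =
    FE F e (p e i).
  case: eqP => [->|i0] /=; first by rewrite -(FE_src F e).
  have iM : (i.-1 < M)%N by apply: leq_ltn_trans (leq_pred i) (ltn_ord i).
  rewrite inordK // prednK; last by case: (i : nat) i0.
  by rewrite ltnW.
exact: sl_step.
Qed.


Lemma sum_pair (f : Sg -> int) : \sum_s f s = \sum_e \sum_i f (e, i).
Proof. by rewrite pair_big /=; apply: eq_bigr => -[]. Qed.

Lemma sum_uniq (T : finType) (P : pred T) (t : T) (c : bool) (f : T -> int) :
  (forall x, P x = (x == t) && c) -> \sum_x (P x)%:R * f x = c%:R * f t.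
Proof.
move=> hP; rewrite (bigD1 t) //= hP eqxx /= big1 ?addr0 // => x /= xt.
by rewrite hP (negbTE xt) andFb b2i.
Qed.

Lemma sum_none (T : finType) (P : pred T) (f : T -> int) :
  (forall x, P x = false) -> \sum_x (P x)%:R * f x = 0.
Proof. by move=> hP; rewrite big1 // => x _; rewrite hP b2i. Qed.

Lemma card_ind (T : finType) (P : pred T) :
  \sum_x (P x)%:R * (1 : int) = #|[set x | P x]|%:Z.
Proof.
rewrite (eq_bigr (fun x => if P x then 1 else 0)); last by move=> x _; rewrite b2i.
by rewrite -big_mkcond sumr_const cardsE natz.
Qed.

Lemma pairE (e e0 : edge G) (i j : 'I_M) :
  ((e, i) == (e0, j)) = (e == e0) && (nat_of_ord i == nat_of_ord j).
Proof. by rewrite xpair_eqE -val_eqE. Qed.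

Definition i0 : 'I_M := inord 0.
Definition ilast e : 'I_M := inord (k e).-1.
Lemma i0E : nat_of_ord i0 = 0%N.
Proof. by rewrite /i0 inordK. Qed.
Lemma ilastE e : nat_of_ord (ilast e) = (k e).-1.
Proof. by rewrite /ilast inordK //; apply: leq_ltn_trans (leq_pred _) (k_ltM e). Qed.

Lemma aS_inl s v : (aS s == inl v) = (s == (s.1, i0)) && (src s.1 == v).
Proof.
case: s => e i; rewrite /aS pairE eqxx i0E /=; case: leqP => h /=.
  by case: (i : nat) h => [|n] h //=; have := k_gt0 e; lia.
by case: (nat_of_ord i == 0%N).
Qed.

Lemma bS_inl s v : (bS s == inl v) = (s == (s.1, ilast s.1)) && (tgt s.1 == v).
Proof.
case: s => e i; rewrite /bS pairE eqxx ilastE /=; case: leqP => h /=.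
  have -> // : (nat_of_ord i == (k e).-1) = false.
  by apply/eqP; have := k_gt0 e; lia.
have -> : (nat_of_ord i == (k e).-1) = (i.+1 == k e).
  by apply/eqP/eqP; lia.
by case: (i.+1 == k e).
Qed.


Ltac fin := repeat (first [ progress (rewrite ?pairE ?andbT ?andbF /=) |
   (apply/eqP/eqP; lia) | (apply/eqP; lia) | done]).

Lemma inordS j e0 : (j.+1 < k e0)%N -> nat_of_ord (inord j.+1 : 'I_M) = j.+1.
Proof. by move=> h; rewrite inordK //; apply: ltn_trans h (k_ltM e0). Qed.
Lemma inordP i e : (0 < i)%N -> (i < k e)%N -> nat_of_ord (inord i.-1 : 'I_M) = i.-1.
Proof. by move=> h h'; rewrite inordK //; have := k_ltM e; lia. Qed.

Lemma inrE (x y : Sg) : (inr x == inr y :> Nd) = (x == y).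
Proof. by []. Qed.
Lemma inlE (x y : vert G) : (inl x == inl y :> Nd) = (x == y).
Proof. by []. Qed.
Lemma inlrE (x : vert G) (y : Sg) : (inl x == inr y :> Nd) = false.
Proof. by []. Qed.
Lemma inrlE (x : vert G) (y : Sg) : (inr y == inl x :> Nd) = false.
Proof. by []. Qed.

Lemma aS_dummy s e0 (j : 'I_M) : (k e0 <= j)%N -> (aS s == inr (e0, j)) = (s == (e0, j)) && true.
Proof.
case: s => e i h; rewrite /aS /=; case: leqP => hi; first by rewrite pairE andbT.
rewrite pairE andbT; case: (e =P e0) => [ee|ne] /=.
- subst e; have -> : (nat_of_ord i == j) = false by apply/eqP; lia.
  case: ifP => [//|/negbT i0]; rewrite inrE pairE eqxx (inordP (e := e0)) //=; last by lia.
  by apply/eqP; lia.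
- by case: ifP => // _; rewrite inrE pairE; case: eqP.
Qed.

Lemma bS_dummy s e0 (j : 'I_M) : (k e0 <= j)%N -> (bS s == inr (e0, j)) = (s == (e0, j)) && true.
Proof.
case: s => e i h; rewrite /bS /=; case: leqP => hi; first by rewrite pairE andbT.
rewrite pairE andbT; case: (e =P e0) => [ee|ne] /=.
- subst e; have -> : (nat_of_ord i == j) = false by apply/eqP; lia.
  by case: ifP => [//|/negbT i0]; rewrite inrE pairE eqxx /=; apply/eqP; lia.
- by case: ifP => // _; rewrite inrE pairE; case: eqP.
Qed.


Lemma aS_extra s e0 (j : 'I_M) : j.+1 = k e0 -> (aS s == inr (e0, j)) = false.
Proof.
case: s => e i h; rewrite /aS /=; case: leqP => hi.
  by rewrite inrE pairE; case: (e =P e0) => [ee|] //=; subst e; apply/eqP; lia.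
case: ifP => [//|/negbT i0]; rewrite inrE pairE.
case: (e =P e0) => [ee|] //=; subst e; rewrite (inordP (e := e0)) //; last by lia.
by apply/eqP; lia.
Qed.

Lemma bS_extra s e0 (j : 'I_M) : j.+1 = k e0 -> (bS s == inr (e0, j)) = false.
Proof.
case: s => e i h; rewrite /bS /=; case: leqP => hi.
  by rewrite inrE pairE; case: (e =P e0) => [ee|] //=; subst e; apply/eqP; lia.
case: ifP => [//|/negbT i0]; rewrite inrE pairE.
by case: (e =P e0) => [ee|] //=; subst e; apply/eqP; lia.
Qed.

Lemma aS_bp s e0 (j : 'I_M) : (j.+1 < k e0)%N ->
  (aS s == inr (e0, j)) = (s == (e0, inord j.+1)) && true.
Proof.
case: s => e i h; rewrite /aS /= pairE (inordS h) andbT; case: leqP => hi.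
  by rewrite inrE pairE; case: (e =P e0) => [ee|] //=; subst e; apply/eqP/eqP; lia.
case: ifP => [/eqP i0|/negbT i0].
  by rewrite inlrE; case: (e =P e0) => [ee|] //=; apply/esym/eqP; lia.
rewrite inrE pairE.
case: (e =P e0) => [ee|] //=; subst e; rewrite (inordP (e := e0)) //; last by lia.
by apply/eqP/eqP; lia.
Qed.

Lemma bS_bp s e0 (j : 'I_M) : (j.+1 < k e0)%N ->
  (bS s == inr (e0, j)) = (s == (e0, j)) && true.
Proof.
case: s => e i h; rewrite /bS /= pairE andbT; case: leqP => hi.
  by rewrite inrE pairE; case: (e =P e0) => [ee|] //=; subst e; apply/eqP/eqP; lia.
case: ifP => [/eqP i0|/negbT i0].
  by rewrite inlrE; case: (e =P e0) => [ee|] //=; subst e; apply/esym/eqP; lia.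
by rewrite inrE pairE.
Qed.


Lemma intr_sum (I : finType) (f : I -> int) : (\sum_i f i)%:~R = \sum_i (f i)%:~R :> R.
Proof. by apply: (big_morph _ (intrD _)). Qed.

Lemma sum_dir (g : edge G * bool -> R) : \sum_d g d = \sum_e (g (e, true) + g (e, false)).
Proof.
rewrite (eq_bigr (fun e => \sum_b g (e, b))); last by move=> e _; rewrite big_bool.
by rewrite pair_big /=; apply: eq_bigr => -[].
Qed.

Lemma outs_inl v : outs aS bS sgS (inl v) =
  \sum_e ((src e == v)%:R * sl e 0 - (tgt e == v)%:R * sl e (k e).-1).
Proof.
rewrite /outs sum_pair; apply: eq_bigr => e _; rewrite sumrB.
rewrite (@sum_uniq _ (fun i => aS (e, i) == inl v) i0 (src e == v) (fun i => sgS (e, i)));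
  last by move=> i; rewrite aS_inl /= xpair_eqE eqxx.
rewrite (@sum_uniq _ (fun i => bS (e, i) == inl v) (ilast e) (tgt e == v) (fun i => sgS (e, i)));
  last by move=> i; rewrite bS_inl /= xpair_eqE eqxx.
have kk : ((k e).-1 < k e)%N by rewrite prednK // k_gt0.
by rewrite /sgS /= i0E ilastE k_gt0 kk.
Qed.

Lemma gdeg_inl v : gdeg aS bS (inl v) = (deg v)%:Z.
Proof.
rewrite /gdeg sum_pair.
rewrite (eq_bigr (fun e => (src e == v)%:R * 1 + (tgt e == v)%:R * 1)).
  by rewrite big_split /= !card_ind /deg PoszD.
move=> e _; rewrite big_split /=.
rewrite (@sum_uniq _ (fun i => aS (e, i) == inl v) i0 (src e == v) (fun i => 1));
  last by move=> i; rewrite aS_inl /= xpair_eqE eqxx.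
rewrite (@sum_uniq _ (fun i => bS (e, i) == inl v) (ilast e) (tgt e == v) (fun i => 1)) //.
by move=> i; rewrite bS_inl /= xpair_eqE eqxx.
Qed.

Lemma ord_vert v : ord F (PVert v) = - (outs aS bS sgS (inl v))%:~R.
Proof.
rewrite /ord big_mkcond sum_dir outs_inl intr_sum; congr (- _); apply: eq_bigr => e _ /=.
rewrite !b2i.
case: (src e =P v) => [sv|/eqP/negbTE sv]; case: (tgt e =P v) => [tv|/eqP/negbTE tv];
  rewrite ?sv ?tv ?eqxx /=.
- by rewrite -{1}sv slope_src -{1}tv slope_tgt intrB.
- by rewrite -{1}sv slope_src subr0 addr0.
- by rewrite -{1}tv slope_tgt sub0r add0r intrN.
- by rewrite subr0 addr0.
Qed.


Lemma gK_inl v : gK aS bS wS (inl v) = Kcoef (PVert v).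
Proof. by rewrite /gK gdeg_inl. Qed.

Lemma ord_edge e t : ord F (PEdge e t) =
  - (slope F (PEdge e t) (e, true) + slope F (PEdge e t) (e, false)).
Proof.
rewrite /ord big_mkcond sum_dir /=; congr (- _).
rewrite (bigD1 e) //= eqxx big1 ?addr0 // => e' /negbTE ne.
by rewrite ne addr0.
Qed.

Lemma gK_inr (x : Sg) : gK aS bS wS (inr x) = 0.
Proof.
case: x => e0 j; rewrite /gK /gdeg big_split /=.
case: (leqP (k e0) j) => hj.
  rewrite (@sum_uniq _ (fun s => aS s == inr (e0, j)) (e0, j) true (fun _ => 1));
    last by move=> s; rewrite aS_dummy.
  rewrite (@sum_uniq _ (fun s => bS s == inr (e0, j)) (e0, j) true (fun _ => 1));
    last by move=> s; rewrite bS_dummy.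
  have -> : (j.+1 == k e0) = false by apply/eqP; lia.
  by [].
case: (j.+1 =P k e0) => hj'.
  rewrite (@sum_none _ (fun s => aS s == inr (e0, j)));
    last by move=> s; rewrite aS_extra.
  rewrite (@sum_none _ (fun s => bS s == inr (e0, j)));
    last by move=> s; rewrite bS_extra.
  by [].
have hj2 : (j.+1 < k e0)%N by lia.
rewrite (@sum_uniq _ (fun s => aS s == inr (e0, j)) (e0, inord j.+1) true (fun _ => 1));
  last by move=> s; rewrite aS_bp.
rewrite (@sum_uniq _ (fun s => bS s == inr (e0, j)) (e0, j) true (fun _ => 1));
  last by move=> s; rewrite bS_bp.
by [].
Qed.


Lemma hD_all (hdiv : div_plus_K_ge0 F) n : 0 <= gD aS bS sgS wS n.
Proof.
case: n => [v|x].
  have := hdiv (PVert v) I; rewrite ord_vert /gD gK_inl -intrN -intrD.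
  by rewrite ler0z.
rewrite /gD gK_inr addr0 oppr_ge0; case: x => e0 j; rewrite /outs sumrB.
case: (leqP (k e0) j) => hj.
  rewrite (@sum_uniq _ (fun s => aS s == inr (e0, j)) (e0, j) true sgS);
    last by move=> s; rewrite aS_dummy.
  rewrite (@sum_uniq _ (fun s => bS s == inr (e0, j)) (e0, j) true sgS);
    last by move=> s; rewrite bS_dummy.
  by rewrite subrr.
case: (j.+1 =P k e0) => hj'.
  rewrite (@sum_none _ (fun s => aS s == inr (e0, j)));
    last by move=> s; rewrite aS_extra.
  rewrite (@sum_none _ (fun s => bS s == inr (e0, j))) ?subrr //.
  by move=> s; rewrite bS_extra.
have hj2 : (j.+1 < k e0)%N by lia.
rewrite (@sum_uniq _ (fun s => aS s == inr (e0, j)) (e0, inord j.+1) true sgS);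
  last by move=> s; rewrite aS_bp.
rewrite (@sum_uniq _ (fun s => bS s == inr (e0, j)) (e0, j) true sgS);
  last by move=> s; rewrite bS_bp.
rewrite /sgS /= (inordS hj2) hj2 (ltn_trans (ltnSn j) hj2) !mul1r.
set t := p e0 j.+1.
have hjk : (j < k e0)%N by lia.
have v : valid (PEdge e0 t).
  rewrite /= /t; apply/andP; split.
    by apply: le_lt_trans (p_ge0 (ltnW hjk)) (p_lt hjk).
  by apply: lt_le_trans (p_lt hj2) (p_lelen hj2).
have := hdiv _ v; rewrite addr0 ord_edge oppr_ge0.
rewrite (slope_fwd (i := j.+1)) //; last by rewrite lexx p_lt.
rewrite (slope_bwd (i := j)) //; last by rewrite lexx p_lt.
by rewrite -intrB lerz0.
Qed.


Lemma gK_nonneg : K_effective G -> forall n, 0 <= gK aS bS wS n.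
Proof.
move=> hK [v|x]; last by rewrite gK_inr.
by rewrite gK_inl; apply: (hK (PVert v)).
Qed.

Lemma nat_bool (b : bool) : (b : nat)%:Z = b%:R * 1.
Proof. by case: b. Qed.

Lemma genus_eq : gg Sg wS = genus G.
Proof.
have cN : #|{: vert G + (edge G * 'I_M)}| = (#|vert G| + #|{: edge G * 'I_M}|)%N by rewrite card_sum.
rewrite /gg /genus big_sumType /= cN.
rewrite (eq_bigr (fun s : Sg => ((s.2.+1 == k s.1)%:R * 1))); last by move=> s _; rewrite nat_bool.
rewrite sum_pair.
rewrite (eq_bigr (fun e : edge G => 1)); last first.
  move=> e _; rewrite (@sum_uniq _ (fun i : 'I_M => i.+1 == k e) (ilast e) true (fun _ => 1)) //.
  by move=> i; rewrite -val_eqE /= ilastE andbT; apply/eqP/eqP; have := k_gt0 e; lia.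
have e1 : #|(fun _ : edge G => true)| = #|edge G| by [].
rewrite sumr_const e1 !natz PoszD; ring.
Qed.

Lemma slope_rep x d : valid x -> is_dir x d -> exists s : Sg, `|slope F x d| = (`|sgS s|)%:~R.
Proof.
case: x => [v|e t] /=; case: d => e' [] /= hv /eqP hd.
- exists (e', i0); rewrite -hd slope_src /sgS /= i0E k_gt0 intr_norm //.
- have kk : ((k e').-1 < k e')%N by rewrite prednK // k_gt0.
  exists (e', ilast e'); rewrite -hd slope_tgt /sgS /= ilastE kk normrN intr_norm //.
- subst e'; have [i ik hi] := find_fwd hv.
  have iM : (i < M)%N by apply: ltn_trans ik (k_ltM e).
  exists (e, inord i); rewrite (slope_fwd ik hi) /sgS /= inordK // ik intr_norm //.
- subst e'; have [i ik hi] := find_bwd hv.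
  have iM : (i < M)%N by apply: ltn_trans ik (k_ltM e).
  exists (e, inord i); rewrite (slope_bwd ik hi) /sgS /= inordK // ik normrN intr_norm //.
Qed.

End Tr.

Theorem lemma4p8 (R : realType) (G : mgraph R) (F : trop_fun G) :
  mg_connected G -> div_plus_K_ge0 F ->
  (forall (x : gpoint G) (d : edge G * bool), valid x -> is_dir x d ->
     `|slope F x d| <= (2 * genus G - 1)%:~R) /\
  (K_effective G ->
   forall (x : gpoint G) (d : edge G * bool), valid x -> is_dir x d ->
     `|slope F x d| <= (2 * genus G - 2)%:~R).
Proof.
move=> _ hdiv; split.
  move=> x d hv hd; have [s ->] := @slope_rep _ _ F x d hv hd.
  have [h _] := gen_main (@lS_pos _ _ F) (@hphiS _ _ F) (hD_all hdiv) s.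
  by rewrite ler_int -(genus_eq F).
move=> hK x d hv hd; have [s ->] := @slope_rep _ _ F x d hv hd.
have [_ h] := gen_main (@lS_pos _ _ F) (@hphiS _ _ F) (hD_all hdiv) s.
by rewrite ler_int -(genus_eq F); apply: h; apply: gK_nonneg hK.
Qed.
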